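(* Let $B$ be a preorder on $\mathcal{SC}$. Then $\rho\dashv_B\mathsf{dual}(\rho)$ for every $\rho\in\mathcal{SC}$.
   Context: Fix base types $BT$ with preorder $\leq_{\mathsf b}$ and labels $\mathcal L$. Contract terms: $\sigma::=\mathbf 1\mid ?\mathtt t.\sigma\mid !\mathtt t.\sigma\mid !(\sigma).\sigma\mid ?(\sigma).\sigma\mid \sum_{i\in I}?l_i.\sigma_i\mid \bigoplus_{i\in I}!l_i.\sigma_i\mid \mu x.\sigma\mid x$ ($I$ finite nonempty, labels distinct). $\mathcal{SC}$ = closed guarded terms (guarded: in each $\mu x.\sigma'$, $x$ occurs in $\sigma'$ only under constructors other than $\mu$). A substitution $s$ is a finite partial map from variables to $\mathcal{SC}$; $\sigma s$ replaces free occurrences of $x\in\mathrm{dom}(s)$ by $s(x)$ (under $\mu y$ the variable $y$ is removed from the domain). LTS: $\mathbf 1\xrightarrow\checkmark$; $\lambda.\sigma\xrightarrow\lambda\sigma$ for prefixes (including $!l.\sigma$); $\bigoplus_{i\in I}!l_i.\sigma_i\xrightarrow\tau!l_i.\sigma_i$ for $|I|>1$; $\sum ?l_i.\sigma_i\xrightarrow{?l_i}\sigma_i$; $\mu x.\sigma\xrightarrow\tau\sigma[\mu x.\sigma/x]$. $\lambda_1\bowtie_B\lambda_2$ iff the pair is $(!l,?l)$, $(?l,!l)$, $(!\mathtt t_1,?\mathtt t_2)$ with $\mathtt t_1\leq_{\mathsf b}\mathtt t_2$, $(?\mathtt t_1,!\mathtt t_2)$ with $\mathtt t_2\leq_{\mathsf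 b}\mathtt t_1$, $(!(\sigma_1),?(\sigma_2))$ with $\sigma_1B\sigma_2$, $(?(\sigma_1),!(\sigma_2))$ with $\sigma_2B\sigma_1$. $\rho\|\sigma\xrightarrow\tau_B$ by a $\tau$ of either side, or $\rho\|\sigma\xrightarrow\tau_B\rho'\|\sigma'$ if $\rho\xrightarrow{\lambda_1}\rho'$, $\sigma\xrightarrow{\lambda_2}\sigma'$, $\lambda_1\bowtie_B\lambda_2$. $\dashv_B$: greatest $R\subseteq\mathcal{SC}^2$ with $\rho R\sigma$ implying (i) if $\rho\|\sigma$ has no $\xrightarrow\tau_B$ move then $\rho\xrightarrow\checkmark$ and $\sigma\xrightarrow\checkmark$; (ii) every $\rho\|\sigma\xrightarrow\tau_B\rho'\|\sigma'$ has $\rho'R\sigma'$. Standard dual $\overline{\cdot}$ (messages unchanged): $\overline{\mathbf 1}=\mathbf 1$, $\overline x=x$, $\overline{\mu x.\sigma}=\mu x.\overline\sigma$, $\overline{?\mathtt t.\sigma}=!\mathtt t.\overline\sigma$, $\overline{!\mathtt t.\sigma}=?\mathtt t.\overline\sigma$, $\overline{?(\sigma^m).\sigma}=!(\sigma^m).\overline\sigma$, $\overline{!(\sigma^m).\sigma}=?(\sigma^m).\overline\sigma$, $\overline{\sum_i ?l_i.\sigma_i}=\bigoplus_i !l_i.\overline{\sigma_i}$, $\overline{\bigoplus_i !l_i.\sigma_i}=\sum_i ?l_i.\overline{\sigma_i}$. M-closure: for $\sigma$ and substitution $s$ with free variables of $\sigma$ in $\mathrm{dom}(s)$, $\mathrm{mclo}(\sigma,s)$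 is: $\mathbf 1\mapsto\mathbf 1$; $x\mapsto x$; $!(\sigma^m).\sigma'\mapsto!(\sigma^m s).\mathrm{mclo}(\sigma',s)$; $?(\sigma^m).\sigma'\mapsto?(\sigma^m s).\mathrm{mclo}(\sigma',s)$; $?\mathtt t.\sigma'\mapsto?\mathtt t.\mathrm{mclo}(\sigma',s)$; $!\mathtt t.\sigma'\mapsto!\mathtt t.\mathrm{mclo}(\sigma',s)$; $\sum_i ?l_i.\sigma_i\mapsto\sum_i ?l_i.\mathrm{mclo}(\sigma_i,s)$; $\bigoplus_i !l_i.\sigma_i\mapsto\bigoplus_i !l_i.\mathrm{mclo}(\sigma_i,s)$; $\mu x.\sigma'\mapsto\mu x.\mathrm{mclo}(\sigma',s')$ where $s'$ maps $x$ to the closed term $(\mu x.\sigma')s$ and agrees with $s$ elsewhere. $\mathrm{mcl}(\sigma)=\mathrm{mclo}(\sigma,\varepsilon)$ ($\varepsilon$ empty substitution), and $\mathsf{dual}(\rho)=\overline{\mathrm{mcl}(\rho)}$. *)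

(* Defs.v *)
From Stdlib Require Import List Arith.
Import ListNotations.
Set Implicit Arguments.

Section Contracts.
Variables (BT L : Type).

(* Contract terms; variables are named by nat.
   Ext  = external choice  sum_i ?l_i.s_i  (a single ?l.s is Ext [(l,s)])
   IntC = internal choice  (+)_i !l_i.s_i  (a single !l.s is IntC [(l,s)]) *)
Inductive term : Type :=
| One : term
| InT : BT -> term -> term
| OutT : BT -> term -> term
| InM : term -> term -> term
| OutM : term -> term -> term
| Ext : list (L * term) -> term
| IntC : list (L * term) -> term
| Mu : nat -> term -> term
| Var : nat -> term.

Fixpoint fv (s : term) : list nat :=
  match s with
  | One => []
  | InT _ k | OutT _ k => fv k
  | InM m k | OutM m k => fv m ++ fv k
  | Ext bs | IntC bs => flat_map (fun '(_, k) => fv k) bs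
  | Mu x k => filter (fun y => negb (Nat.eqb y x)) (fv k)
  | Var x => [x]
  end.

Definition closed (s : term) : Prop := fv s = [].

(* [gd x s]: every free occurrence of x in s lies under a constructor other than mu *)
Fixpoint gd (x : nat) (s : term) : Prop :=
  match s with
  | Var y => y <> x
  | Mu y k => y = x \/ gd x k
  | _ => True
  end.

Fixpoint guarded (s : term) : Prop :=
  match s with
  | One | Var _ => True
  | InT _ k | OutT _ k => guarded k
  | InM m k | OutM m k => guarded m /\ guarded k
  | Ext bs | IntC bs => fold_right (fun '(_, k) acc => guarded k /\ acc) True bs
  | Mu x k => gd x k /\ guarded k
  end.

Fixpoint wf (s : term) : Prop :=
  match s with
  | One | Var _ => True
  | InT _ k | OutT _ k => wf k
  | InM m k | OutM m k => wf m /\ wf k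
  | Ext bs | IntC bs =>
      bs <> [] /\ NoDup (map fst bs) /\
      fold_right (fun '(_, k) acc => wf k /\ acc) True bs
  | Mu _ k => wf k
  end.

Definition SC (s : term) : Prop := closed s /\ guarded s /\ wf s.

Definition subst_t := nat -> option term.
Definition eps : subst_t := fun _ => None.
Definition upd (s : subst_t) (x : nat) (t : term) : subst_t :=
  fun y => if Nat.eqb y x then Some t else s y.
Definition rem (s : subst_t) (x : nat) : subst_t :=
  fun y => if Nat.eqb y x then None else s y.

Fixpoint subst (s : subst_t) (t : term) : term :=
  match t with
  | One => One
  | InT b k => InT b (subst s k)
  | OutT b k => OutT b (subst s k)
  | InM m k => InM (subst s m) (subst s k)
  | OutM m k => OutM (subst s m) (subst s k)
  | Ext bs => Ext (map (fun '(l, k) => (l, subst s k)) bs)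
  | IntC bs => IntC (map (fun '(l, k) => (l, subst s k)) bs)
  | Mu x k => Mu x (subst (rem s x) k)
  | Var x => match s x with Some u => u | None => Var x end
  end.

Definition unfold (x : nat) (k : term) : term := subst (upd eps x (Mu x k)) k.

Inductive act : Type :=
| aInT : BT -> act | aOutT : BT -> act
| aInM : term -> act | aOutM : term -> act
| aInL : L -> act | aOutL : L -> act.

Definition ticks (s : term) : Prop := s = One.

Inductive tstep : term -> term -> Prop :=
| ts_int : forall bs l k, 1 < length bs -> In (l, k) bs -> tstep (IntC bs) (IntC [(l, k)])
| ts_mu : forall x k, tstep (Mu x k) (unfold x k).

Inductive vstep : term -> act -> term -> Prop :=
| vs_inT : forall b k, vstep (InT b k) (aInT b) k
| vs_outT : forall b k, vstep (OutT b k) (aOutT b) k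
| vs_inM : forall m k, vstep (InM m k) (aInM m) k
| vs_outM : forall m k, vstep (OutM m k) (aOutM m) k
| vs_ext : forall bs l k, In (l, k) bs -> vstep (Ext bs) (aInL l) k
| vs_outL : forall l k, vstep (IntC [(l, k)]) (aOutL l) k.

Variable leb : BT -> BT -> Prop.

Definition compat (B : term -> term -> Prop) (a1 a2 : act) : Prop :=
  match a1, a2 with
  | aOutL l1, aInL l2 => l1 = l2
  | aInL l1, aOutL l2 => l1 = l2
  | aOutT t1, aInT t2 => leb t1 t2
  | aInT t1, aOutT t2 => leb t2 t1
  | aOutM s1, aInM s2 => B s1 s2
  | aInM s1, aOutM s2 => B s2 s1
  | _, _ => False
  end.

Inductive pair_tau (B : term -> term -> Prop) (r s : term) : term -> term -> Prop :=
| pt_l : forall r', tstep r r' -> pair_tau B r s r' s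
| pt_r : forall s', tstep s s' -> pair_tau B r s r s'
| pt_sync : forall r' s' a1 a2,
    vstep r a1 r' -> vstep s a2 s' -> compat B a1 a2 -> pair_tau B r s r' s'.

Definition is_compliance (B R : term -> term -> Prop) : Prop :=
  forall r s, R r s ->
    SC r /\ SC s /\
    ((~ exists r' s', pair_tau B r s r' s') -> ticks r /\ ticks s) /\
    (forall r' s', pair_tau B r s r' s' -> R r' s').

Definition compliant (B : term -> term -> Prop) (r s : term) : Prop :=
  exists R, is_compliance B R /\ R r s.

Fixpoint bar (t : term) : term :=
  match t with
  | One => One
  | Var x => Var x
  | Mu x k => Mu x (bar k)
  | InT b k => OutT b (bar k)
  | OutT b k => InT b (bar k)
  | InM m k => OutM m (bar k)
  | OutM m k => InM m (bar k)
  | Ext bs => IntC (map (fun '(l, k) => (l, bar k)) bs)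
  | IntC bs => Ext (map (fun '(l, k) => (l, bar k)) bs)
  end.

Fixpoint mclo (s : subst_t) (t : term) : term :=
  match t with
  | One => One
  | Var x => Var x
  | OutM m k => OutM (subst s m) (mclo s k)
  | InM m k => InM (subst s m) (mclo s k)
  | InT b k => InT b (mclo s k)
  | OutT b k => OutT b (mclo s k)
  | Ext bs => Ext (map (fun '(l, k) => (l, mclo s k)) bs)
  | IntC bs => IntC (map (fun '(l, k) => (l, mclo s k)) bs)
  | Mu x k => Mu x (mclo (upd s x (subst s (Mu x k))) k)
  end.

Definition mcl (t : term) : term := mclo eps t.
Definition dual (t : term) : term := bar (mcl t).

End Contracts.

Arguments One {BT L}.

(* Main.v *)
Require Import Defs.
From Stdlib Require Import List Arith Lia.
Import ListNotations.
Unset Implicit Arguments.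

Section S.
Variables BT L : Type.
Notation T := (term BT L).
Notation sb := (subst_t BT L).

Definition term_ind2 (P : T -> Prop)
  (H1 : P One)
  (H2 : forall b k, P k -> P (InT b k))
  (H3 : forall b k, P k -> P (OutT b k))
  (H4 : forall m k, P m -> P k -> P (InM m k))
  (H5 : forall m k, P m -> P k -> P (OutM m k))
  (H6 : forall bs, Forall (fun p => P (snd p)) bs -> P (Ext bs))
  (H7 : forall bs, Forall (fun p => P (snd p)) bs -> P (IntC bs))
  (H8 : forall x k, P k -> P (Mu x k))
  (H9 : forall x, P (Var BT L x)) : forall t, P t :=
  fix F t := match t with
  | One => H1
  | InT b k => H2 b k (F k)
  | OutT b k => H3 b k (F k)
  | InM m k => H4 m k (F m) (F k)
  | OutM m k => H5 m k (F m) (F k)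
  | Ext bs => H6 bs ((fix G bs : Forall (fun p => P (snd p)) bs :=
        match bs with [] => Forall_nil _ | p :: r => Forall_cons p (F (snd p)) (G r) end) bs)
  | IntC bs => H7 bs ((fix G bs : Forall (fun p => P (snd p)) bs :=
        match bs with [] => Forall_nil _ | p :: r => Forall_cons p (F (snd p)) (G r) end) bs)
  | Mu x k => H8 x k (F k)
  | Var _ _ x => H9 x
  end.

Lemma in_fv_list (y : nat) (bs : list (L * T)) :
  In y (flat_map (fun '(_, k) => fv k) bs) <-> exists l k, In (l, k) bs /\ In y (fv k).
Proof.
  rewrite in_flat_map. split.
  - intros [[l k] [H1 H2]]. eauto.
  - intros (l & k & H1 & H2). exists (l, k). auto.
Qed.

Lemma map_pair_ext (f g : T -> T) (bs : list (L * T)) :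
  Forall (fun p => f (snd p) = g (snd p)) bs ->
  map (fun '(l, k) => (l, f k)) bs = map (fun '(l, k) => (l, g k)) bs.
Proof.
  induction 1 as [|[l k] bs H _ IH]; simpl in *; congruence.
Qed.

Lemma map_pair_id (f : T -> T) (bs : list (L * T)) :
  Forall (fun p => f (snd p) = snd p) bs ->
  map (fun '(l, k) => (l, f k)) bs = bs.
Proof.
  induction 1 as [|[l k] bs H _ IH]; simpl in *; congruence.
Qed.

Lemma map_pair_comp (f g : T -> T) (bs : list (L * T)) :
  map (fun '(l, k) => (l, f k)) (map (fun '(l, k) => (l, g k)) bs)
  = map (fun '(l, k) => (l, f (g k))) bs.
Proof. induction bs as [|[l k] bs IH]; simpl; congruence. Qed.

Lemma Forall_impl_in (P Q : L * T -> Prop) bs :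
  Forall P bs -> (forall l k, In (l, k) bs -> P (l, k) -> Q (l, k)) -> Forall Q bs.
Proof.
  intros H1 H2. rewrite Forall_forall in *. intros [l k] Hi. auto.
Qed.

Lemma subst_ext : forall t (s s' : sb), (forall y, In y (fv t) -> s y = s' y) ->
  subst s t = subst s' t.
Proof.
  induction t using term_ind2; intros s s' Hs; simpl in *; try (f_equal; auto; fail).
  - f_equal; [apply IHt1|apply IHt2]; intros; apply Hs; apply in_or_app; auto.
  - f_equal; [apply IHt1|apply IHt2]; intros; apply Hs; apply in_or_app; auto.
  - f_equal. apply map_pair_ext. eapply Forall_impl_in; [exact H|]. simpl.
    intros l k Hi IH. apply IH. intros y Hy. apply Hs. apply in_fv_list. eauto.
  - f_equal. apply map_pair_ext. eapply Forall_impl_in; [exact H|]. simpl.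
    intros l k Hi IH. apply IH. intros y Hy. apply Hs. apply in_fv_list. eauto.
  - f_equal. apply IHt. intros y Hy. unfold rem.
    destruct (Nat.eqb y x) eqn:E; auto. apply Hs. apply filter_In. rewrite E. auto.
  - rewrite (Hs x); auto.
Qed.

Lemma subst_none : forall t (s : sb), (forall y, s y = None) -> subst s t = t.
Proof.
  induction t using term_ind2; intros s Hs; simpl in *; try (f_equal; auto; fail).
  - f_equal. apply map_pair_id. eapply Forall_impl; [|exact H]. simpl. auto.
  - f_equal. apply map_pair_id. eapply Forall_impl; [|exact H]. simpl. auto.
  - f_equal. apply IHt. intros y. unfold rem. destruct (Nat.eqb y x); auto.
  - rewrite Hs. reflexivity.
Qed.

Lemma subst_closed (s : sb) t : closed t -> subst s t = t.
Proof.
  intros Hc. rewrite (subst_ext t s (eps BT L)).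
  - apply subst_none. reflexivity.
  - intros y Hy. unfold closed in Hc. rewrite Hc in Hy. destruct Hy.
Qed.

Definition good (s : sb) := forall y u, s y = Some u -> closed u.

Lemma good_rem (s : sb) x : good s -> good (rem s x).
Proof. unfold good, rem. intros H y u. destruct (Nat.eqb y x); eauto. discriminate. Qed.

Lemma good_upd (s : sb) x u : good s -> closed u -> good (upd s x u).
Proof. unfold good, upd. intros H Hu y v. destruct (Nat.eqb y x); eauto. congruence. Qed.

Lemma fv_subst : forall t (s : sb) y, good s -> In y (fv (subst s t)) -> In y (fv t) /\ s y = None.
Proof.
  induction t using term_ind2; intros s y Hg Hy; simpl in *; try contradiction;
    try (eapply IHt; eauto; fail).
  - apply in_app_or in Hy. destruct Hy as [Hy|Hy];
      [destruct (IHt1 s y Hg Hy)|destruct (IHt2 s y Hg Hy)]; split; auto; apply in_or_app; auto.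
  - apply in_app_or in Hy. destruct Hy as [Hy|Hy];
      [destruct (IHt1 s y Hg Hy)|destruct (IHt2 s y Hg Hy)]; split; auto; apply in_or_app; auto.
  - apply in_fv_list in Hy. destruct Hy as (l & k' & Hi & Hy).
    apply in_map_iff in Hi. destruct Hi as [[l0 k] [Heq Hi]]. injection Heq as <- <-.
    rewrite Forall_forall in H. destruct (H _ Hi s y Hg Hy) as [H1 H2]. split; auto.
    apply in_fv_list. eauto.
  - apply in_fv_list in Hy. destruct Hy as (l & k' & Hi & Hy).
    apply in_map_iff in Hi. destruct Hi as [[l0 k] [Heq Hi]]. injection Heq as <- <-.
    rewrite Forall_forall in H. destruct (H _ Hi s y Hg Hy) as [H1 H2]. split; auto.
    apply in_fv_list. eauto.
  - apply filter_In in Hy. destruct Hy as [Hy E].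
    destruct (IHt (rem s x) y (good_rem s x Hg) Hy) as [H1 H2]. unfold rem in H2.
    split; [apply filter_In; split; auto|]. destruct (Nat.eqb y x); simpl in E; congruence.
  - destruct (s x) eqn:E.
    + apply Hg in E. unfold closed in E. rewrite E in Hy. destruct Hy.
    + simpl in Hy. destruct Hy as [<-|[]]. auto.
Qed.


Definition comb (th et : sb) : sb := fun y => match th y with Some u => Some u | None => et y end.

Lemma good_comb th et : good th -> good et -> good (comb th et).
Proof. unfold good, comb. intros H1 H2 y u. destruct (th y) eqn:E; eauto. intros He. injection He as <-. eauto. Qed.

Lemma subst_comp : forall t (th et : sb), good th ->
  subst et (subst th t) = subst (comb th et) t.
Proof.
  induction t using term_ind2; intros th et Hg; simpl in *; try (f_equal; auto; fail).
  - f_equal. rewrite map_pair_comp. apply map_pair_ext. eapply Forall_impl; [|exact H]. simpl; auto.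
  - f_equal. rewrite map_pair_comp. apply map_pair_ext. eapply Forall_impl; [|exact H]. simpl; auto.
  - f_equal. rewrite IHt by (apply good_rem; auto). apply subst_ext. intros y _.
    unfold comb, rem. destruct (Nat.eqb y x); auto.
  - unfold comb. destruct (th x) eqn:E; auto. apply subst_closed. eapply Hg; eauto.
Qed.

Lemma mclo_ext : forall t (s s' : sb), (forall y, In y (fv t) -> s y = s' y) ->
  mclo s t = mclo s' t.
Proof.
  induction t using term_ind2; intros s s' Hs; simpl in *; try (f_equal; auto; fail).
  - f_equal; [apply subst_ext|apply IHt2]; intros; apply Hs; apply in_or_app; auto.
  - f_equal; [apply subst_ext|apply IHt2]; intros; apply Hs; apply in_or_app; auto.
  - f_equal. apply map_pair_ext. eapply Forall_impl_in; [exact H|]. simpl.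
    intros l k Hi IH. apply IH. intros y Hy. apply Hs. apply in_fv_list. eauto.
  - f_equal. apply map_pair_ext. eapply Forall_impl_in; [exact H|]. simpl.
    intros l k Hi IH. apply IH. intros y Hy. apply Hs. apply in_fv_list. eauto.
  - f_equal. apply IHt. intros y Hy. unfold upd.
    destruct (Nat.eqb y x) eqn:E.
    + f_equal. f_equal. apply subst_ext. intros z Hz. unfold rem.
      destruct (Nat.eqb z x) eqn:E2; auto. apply Hs. apply filter_In. rewrite E2. auto.
    + apply Hs. apply filter_In. rewrite E. auto.
Qed.

Lemma mclo_closed (s : sb) (u : T) : closed u -> mclo s u = mcl u.
Proof.
  intros Hc. unfold mcl. apply mclo_ext. intros y Hy. unfold closed in Hc. rewrite Hc in Hy. destruct Hy.
Qed.

Definition cover (s : sb) (t : T) := forall y, In y (fv t) -> s y <> None.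

Lemma closed_subst_cover (s : sb) (t : T) : good s -> cover s t -> closed (subst s t).
Proof.
  intros Hg Hc. unfold closed. destruct (fv (subst s t)) as [|y l] eqn:E; auto.
  exfalso. destruct (fv_subst t s y Hg) as [H1 H2]. rewrite E; left; auto.
  exact (Hc y H1 H2).
Qed.

Definition hat (th : sb) : sb := fun y => option_map (@mcl BT L) (th y).

Lemma mclo_subst : forall k (et th : sb), good th -> good et ->
  (forall y, In y (fv k) -> th y <> None \/ et y <> None) ->
  mclo et (subst th k) = subst (hat th) (mclo (comb th et) k).
Proof.
  induction k using term_ind2; intros et th Hth Het Hc; simpl in *; try (f_equal; auto; fail).
  - assert (Hcl : closed (subst (comb th et) k1)).
    { apply closed_subst_cover. apply good_comb; auto. intros y Hy. unfold comb.
      destruct (Hc y) as [H|H]; [apply in_or_app; auto| |]; destruct (th y); congruence. }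
    f_equal.
    + rewrite subst_comp by auto. symmetry. apply subst_closed. auto.
    + apply IHk2; auto. intros; apply Hc; apply in_or_app; auto.
  - assert (Hcl : closed (subst (comb th et) k1)).
    { apply closed_subst_cover. apply good_comb; auto. intros y Hy. unfold comb.
      destruct (Hc y) as [H|H]; [apply in_or_app; auto| |]; destruct (th y); congruence. }
    f_equal.
    + rewrite subst_comp by auto. symmetry. apply subst_closed. auto.
    + apply IHk2; auto. intros; apply Hc; apply in_or_app; auto.
  - f_equal. rewrite !map_pair_comp. apply map_pair_ext. eapply Forall_impl_in; [exact H|]. simpl.
    intros l k Hi IH. apply IH; auto. intros y Hy. apply Hc. apply in_fv_list. eauto.
  - f_equal. rewrite !map_pair_comp. apply map_pair_ext. eapply Forall_impl_in; [exact H|]. simpl.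
    intros l k Hi IH. apply IH; auto. intros y Hy. apply Hc. apply in_fv_list. eauto.
  - f_equal.
    pose proof (subst_comp (Mu x k) th et Hth) as HV. simpl in HV. rewrite HV.
    set (W := Mu x (subst (rem (comb th et) x) k)).
    assert (HW : closed W).
    { pose proof (closed_subst_cover (comb th et) (Mu x k)) as HH. simpl in HH. apply HH.
      apply good_comb; auto. intros y Hy. unfold comb. destruct (Hc y Hy) as [H|H]; destruct (th y); congruence. }
    rewrite IHk.
    + transitivity (subst (rem (hat th) x) (mclo (comb (rem th x) (upd et x W)) k)).
      * apply subst_ext. intros y _. unfold hat, rem. destruct (Nat.eqb y x); auto.
      * f_equal. apply mclo_ext. intros y _. unfold comb, rem, upd. destruct (Nat.eqb y x); auto.
    + apply good_rem; auto.
    + apply good_upd; auto.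
    + intros y Hy. unfold rem, upd. destruct (Nat.eqb y x) eqn:E.
      * right; discriminate.
      * apply Hc. apply filter_In. rewrite E. auto.
  - unfold hat. destruct (th x) eqn:E; simpl.
    + apply mclo_closed. eapply Hth; eauto.
    + reflexivity.
Qed.

Lemma fold_Forall (P : T -> Prop) (bs : list (L * T)) :
  fold_right (fun '(_, k) acc => P k /\ acc) True bs <-> Forall (fun p => P (snd p)) bs.
Proof.
  induction bs as [|[l k] bs IH]; simpl.
  - split; auto.
  - rewrite IH. split; [intros [H1 H2]; constructor; auto | intros H; inversion H; auto].
Qed.

Fixpoint MC (t : T) : Prop :=
  match t with
  | One | Var _ _ _ => True
  | InT _ k | OutT _ k => MC k
  | InM m k | OutM m k => closed m /\ MC k
  | Ext bs | IntC bs => fold_right (fun '(_, k) acc => MC k /\ acc) True bs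
  | Mu _ k => MC k
  end.

Lemma MC_mclo : forall t (s : sb), good s -> cover s t -> MC (mclo s t).
Proof.
  induction t using term_ind2; intros s Hg Hc; simpl in *; auto.
  - split; [apply closed_subst_cover; auto|apply IHt2; auto];
      intros y Hy; apply Hc; apply in_or_app; auto.
  - split; [apply closed_subst_cover; auto|apply IHt2; auto];
      intros y Hy; apply Hc; apply in_or_app; auto.
  - apply fold_Forall. rewrite Forall_map. eapply Forall_impl_in; [exact H|]. simpl.
    intros l k Hi IH. apply IH; auto. intros y Hy. apply Hc. apply in_fv_list; eauto.
  - apply fold_Forall. rewrite Forall_map. eapply Forall_impl_in; [exact H|]. simpl.
    intros l k Hi IH. apply IH; auto. intros y Hy. apply Hc. apply in_fv_list; eauto.
  - apply IHt.
    + apply good_upd; auto. apply (closed_subst_cover s (Mu x t)); auto.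
    + intros y Hy. unfold upd. destruct (Nat.eqb y x) eqn:E; [discriminate|].
      apply Hc. apply filter_In. rewrite E. auto.
Qed.

Definition bhat (th : sb) : sb := fun y => option_map (@bar BT L) (th y).

Lemma bar_subst : forall t (th : sb), MC t -> bar (subst th t) = subst (bhat th) (bar t).
Proof.
  induction t using term_ind2; intros th Hm; simpl in *; try (f_equal; auto; fail).
  - destruct Hm as [H1 H2]. rewrite (subst_closed th t1 H1), (subst_closed (bhat th) t1 H1). f_equal; auto.
  - destruct Hm as [H1 H2]. rewrite (subst_closed th t1 H1), (subst_closed (bhat th) t1 H1). f_equal; auto.
  - apply fold_Forall in Hm. f_equal. rewrite !map_pair_comp. apply map_pair_ext.
    rewrite Forall_forall in *. intros [l k] Hi. simpl. apply (H _ Hi). apply (Hm _ Hi).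
  - apply fold_Forall in Hm. f_equal. rewrite !map_pair_comp. apply map_pair_ext.
    rewrite Forall_forall in *. intros [l k] Hi. simpl. apply (H _ Hi). apply (Hm _ Hi).
  - f_equal. rewrite IHt by auto. apply subst_ext. intros y _. unfold bhat, rem.
    destruct (Nat.eqb y x); auto.
  - unfold bhat. destruct (th x); reflexivity.
Qed.

Lemma unf_eq x (k : T) : Defs.unfold x k = subst (upd (eps BT L) x (Mu x k)) k.
Proof. reflexivity. Qed.

Lemma dual_Mu x (k : T) :
  dual (Mu x k) = Mu x (bar (mclo (upd (eps BT L) x (Mu x k)) k)).
Proof.
  unfold dual, mcl. simpl. do 2 f_equal. apply mclo_ext. intros y _. unfold upd.
  destruct (Nat.eqb y x); auto. f_equal. f_equal. apply subst_none.
  intros z. unfold rem, eps. destruct (Nat.eqb z x); auto.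
Qed.

Lemma dual_unfold x (k : T) : closed (Mu x k) ->
  dual (Defs.unfold x k) = Defs.unfold x (bar (mclo (upd (eps BT L) x (Mu x k)) k)).
Proof.
  intros Hc. set (M := Mu x k). set (th := upd (eps BT L) x M).
  assert (Hgth : good th) by (apply good_upd; [intros y u H; discriminate|exact Hc]).
  assert (Hcov : cover th k).
  { intros y Hy. unfold th, upd. destruct (Nat.eqb y x) eqn:E; [discriminate|].
    exfalso. unfold M, closed in Hc. simpl in Hc.
    assert (In y (filter (fun y0 => negb (Nat.eqb y0 x)) (fv k))) by (apply filter_In; rewrite E; auto).
    rewrite Hc in H. exact H. }
  set (C := mclo th k).
  unfold dual, mcl. rewrite unf_eq. fold th.
  rewrite mclo_subst; [| exact Hgth | intros y u H; discriminate | intros y Hy; left; apply Hcov; auto].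
  change (upd (eps BT L) x (Mu x k)) with th.
  rewrite (mclo_ext k (comb th (eps BT L)) th).
  2: intros y _; unfold comb; destruct (th y); reflexivity.
  fold C.
  assert (HmM : mclo (eps BT L) M = Mu x C).
  { unfold M. simpl. f_equal. unfold C, th. apply mclo_ext. intros y _. unfold upd.
    destruct (Nat.eqb y x); auto. unfold M. do 2 f_equal. apply subst_none. intros z. unfold rem, eps.
    destruct (Nat.eqb z x); auto. }
  rewrite (subst_ext C (hat th) (upd (eps BT L) x (Mu x C))).
  2: { intros y _. unfold hat, th, upd. destruct (Nat.eqb y x); auto. simpl. unfold mcl. rewrite HmM. reflexivity. }
  rewrite bar_subst.
  2: { apply MC_mclo; auto. }
  rewrite unf_eq. apply subst_ext. intros y _. unfold bhat, upd. destruct (Nat.eqb y x); auto.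
Qed.

Definition goodSC (s : sb) := forall y u, s y = Some u -> SC u.

Lemma goodSC_good s : goodSC s -> good s.
Proof. intros H y u E. apply (H y u E). Qed.

Lemma goodSC_rem (s : sb) x : goodSC s -> goodSC (rem s x).
Proof. unfold goodSC, rem. intros H y u. destruct (Nat.eqb y x); eauto. discriminate. Qed.

Lemma goodSC_upd (s : sb) x u : goodSC s -> SC u -> goodSC (upd s x u).
Proof. unfold goodSC, upd. intros H Hu y v. destruct (Nat.eqb y x); eauto. congruence. Qed.

Lemma goodSC_eps : goodSC (eps BT L).
Proof. intros y u H. discriminate. Qed.

Lemma gd_notfree : forall (t : T) y, ~ In y (fv t) -> gd y t.
Proof.
  induction t using term_ind2; intros y Hy; simpl in *; auto.
  - destruct (Nat.eq_dec x y) as [->|Hne]; auto. right. apply IHt. intros Hin.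
    apply Hy. apply filter_In. split; auto. destruct (Nat.eqb_spec y x); [congruence|auto].
Qed.

Lemma gd_subst : forall (t : T) (s : sb) y, gd y t -> good s -> s y = None -> gd y (subst s t).
Proof.
  induction t using term_ind2; intros s y Hgd Hg Hy; simpl in *; auto.
  - destruct Hgd as [->|Hgd]; auto. right. apply IHt; auto. apply good_rem; auto.
    unfold rem. destruct (Nat.eqb y x); auto.
  - destruct (s x) eqn:E.
    + apply gd_notfree. apply Hg in E. unfold closed in E. rewrite E. auto.
    + simpl. auto.
Qed.

Lemma map_fst_pair (f : T -> T) (bs : list (L * T)) :
  map fst (map (fun '(l, k) => (l, f k)) bs) = map fst bs.
Proof. induction bs as [|[l k] bs IH]; simpl; congruence. Qed.

Lemma map_pair_nil (f : T -> T) (bs : list (L * T)) :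
  bs <> [] -> map (fun '(l, k) => (l, f k)) bs <> [].
Proof. destruct bs as [|[l k] bs]; simpl; congruence. Qed.

Lemma guarded_wf_subst : forall (t : T) (s : sb), goodSC s ->
  (guarded t -> guarded (subst s t)) /\ (wf t -> wf (subst s t)).
Proof.
  induction t using term_ind2; intros s Hs; simpl in *; auto.
  - destruct (IHt1 s Hs), (IHt2 s Hs). tauto.
  - destruct (IHt1 s Hs), (IHt2 s Hs). tauto.
  - split.
    + rewrite !fold_Forall. rewrite Forall_map. intros Hf. rewrite Forall_forall in *.
      intros [l k] Hi. simpl. apply (H _ Hi s Hs). apply (Hf _ Hi).
    + rewrite !fold_Forall. rewrite map_fst_pair. intros (H1 & H2 & Hf).
      split; [apply map_pair_nil; auto|split; auto]. rewrite Forall_map.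
      rewrite Forall_forall in *. intros [l k] Hi. simpl. apply (H _ Hi s Hs). apply (Hf _ Hi).
  - split.
    + rewrite !fold_Forall. rewrite Forall_map. intros Hf. rewrite Forall_forall in *.
      intros [l k] Hi. simpl. apply (H _ Hi s Hs). apply (Hf _ Hi).
    + rewrite !fold_Forall. rewrite map_fst_pair. intros (H1 & H2 & Hf).
      split; [apply map_pair_nil; auto|split; auto]. rewrite Forall_map.
      rewrite Forall_forall in *. intros [l k] Hi. simpl. apply (H _ Hi s Hs). apply (Hf _ Hi).
  - destruct (IHt (rem s x) (goodSC_rem s x Hs)) as [H1 H2]. split; auto.
    intros [Hgd Hgu]. split; auto. apply gd_subst; auto.
    + apply good_rem. apply goodSC_good; auto.
    + unfold rem. rewrite Nat.eqb_refl. auto.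
  - destruct (s x) eqn:E; simpl; auto. apply Hs in E. destruct E as (_ & ? & ?). auto.
Qed.

Lemma SC_unfold x (k : T) : SC (Mu x k) -> SC (Defs.unfold x k).
Proof.
  intros HS. pose proof HS as (Hc & [Hgd Hgu] & Hw). simpl in Hw.
  assert (Hg : goodSC (upd (eps BT L) x (Mu x k))) by (apply goodSC_upd; [apply goodSC_eps|auto]).
  rewrite unf_eq. split; [|split].
  - apply closed_subst_cover. apply goodSC_good; auto.
    intros y Hy. unfold upd. destruct (Nat.eqb y x) eqn:E; [discriminate|].
    exfalso. unfold closed in Hc. simpl in Hc.
    assert (In y (filter (fun y0 => negb (Nat.eqb y0 x)) (fv k))) by (apply filter_In; rewrite E; auto).
    rewrite Hc in H. exact H.
  - apply (guarded_wf_subst k _ Hg). auto.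
  - apply (guarded_wf_subst k _ Hg). auto.
Qed.

Lemma fv_bar : forall t : T, fv (bar t) = fv t.
Proof.
  induction t using term_ind2; simpl; try congruence.
  all: induction H as [|[l k] bs H _ IH]; simpl in *; congruence.
Qed.

Lemma gd_bar : forall (t : T) y, gd y t -> gd y (bar t).
Proof. induction t using term_ind2; intros y Hg; simpl in *; auto. destruct Hg; auto. Qed.

Lemma guarded_wf_bar : forall t : T, (guarded t -> guarded (bar t)) /\ (wf t -> wf (bar t)).
Proof.
  induction t using term_ind2; simpl in *; auto; try tauto.
  - split.
    + rewrite !fold_Forall. rewrite Forall_map. intros Hf. rewrite Forall_forall in *.
      intros [l k] Hi. simpl. apply (H _ Hi). apply (Hf _ Hi).
    + rewrite !fold_Forall. rewrite map_fst_pair. intros (H1 & H2 & Hf).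
      split; [apply map_pair_nil; auto|split; auto]. rewrite Forall_map.
      rewrite Forall_forall in *. intros [l k] Hi. simpl. apply (H _ Hi). apply (Hf _ Hi).
  - split.
    + rewrite !fold_Forall. rewrite Forall_map. intros Hf. rewrite Forall_forall in *.
      intros [l k] Hi. simpl. apply (H _ Hi). apply (Hf _ Hi).
    + rewrite !fold_Forall. rewrite map_fst_pair. intros (H1 & H2 & Hf).
      split; [apply map_pair_nil; auto|split; auto]. rewrite Forall_map.
      rewrite Forall_forall in *. intros [l k] Hi. simpl. apply (H _ Hi). apply (Hf _ Hi).
  - split; [intros [? ?]; split; [apply gd_bar|]|]; tauto.
Qed.

Lemma gd_mclo : forall (t : T) (s : sb) y, gd y t -> gd y (mclo s t).
Proof. induction t using term_ind2; intros s y Hg; simpl in *; auto. destruct Hg; auto. Qed.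

Lemma mclo_props : forall (t : T) (s : sb), goodSC s -> cover s t -> guarded t -> wf t ->
  guarded (mclo s t) /\ wf (mclo s t) /\ (forall y, In y (fv (mclo s t)) -> In y (fv t)).
Proof.
  induction t using term_ind2; intros s Hs Hc Hgu Hw; simpl in *; auto.
  - destruct Hgu, Hw.
    assert (Hc2 : cover s t2) by (intros y Hy; apply Hc; apply in_or_app; auto).
    destruct (IHt2 s Hs Hc2) as (? & ? & ?); auto.
    destruct (guarded_wf_subst t1 s Hs). split; [|split]; auto.
    intros y Hy. apply in_app_or in Hy. apply in_or_app. destruct Hy; auto.
    left. apply (fv_subst t1 s y); auto. apply goodSC_good; auto.
  - destruct Hgu, Hw.
    assert (Hc2 : cover s t2) by (intros y Hy; apply Hc; apply in_or_app; auto).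
    destruct (IHt2 s Hs Hc2) as (? & ? & ?); auto.
    destruct (guarded_wf_subst t1 s Hs). split; [|split]; auto.
    intros y Hy. apply in_app_or in Hy. apply in_or_app. destruct Hy; auto.
    left. apply (fv_subst t1 s y); auto. apply goodSC_good; auto.
  - destruct Hw as (Hne & Hnd & Hw). rewrite fold_Forall in Hgu, Hw.
    rewrite Forall_forall in H, Hgu, Hw.
    assert (IH : forall l k, In (l, k) bs -> guarded (mclo s k) /\ wf (mclo s k) /\
       (forall y, In y (fv (mclo s k)) -> In y (fv k))).
    { intros l k Hi. apply (H _ Hi); auto;
      first [intros y Hy; apply Hc; apply in_fv_list; eauto; fail | apply (Hgu _ Hi) | apply (Hw _ Hi)]. }
    split; [|split; [split; [apply map_pair_nil; auto|split]|]].
    + rewrite fold_Forall, Forall_map, Forall_forall. intros [l k] Hi. apply (IH l k Hi).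
    + rewrite map_fst_pair; auto.
    + rewrite fold_Forall, Forall_map, Forall_forall. intros [l k] Hi. apply (IH l k Hi).
    + intros y Hy. apply in_fv_list in Hy. destruct Hy as (l & k' & Hi & Hy).
      apply in_map_iff in Hi. destruct Hi as [[l0 k] [Heq Hi]]. injection Heq as <- <-.
      apply in_fv_list. exists l0, k. split; auto. apply (IH l0 k Hi). auto.
  - destruct Hw as (Hne & Hnd & Hw). rewrite fold_Forall in Hgu, Hw.
    rewrite Forall_forall in H, Hgu, Hw.
    assert (IH : forall l k, In (l, k) bs -> guarded (mclo s k) /\ wf (mclo s k) /\
       (forall y, In y (fv (mclo s k)) -> In y (fv k))).
    { intros l k Hi. apply (H _ Hi); auto;
      first [intros y Hy; apply Hc; apply in_fv_list; eauto; fail | apply (Hgu _ Hi) | apply (Hw _ Hi)]. }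
    split; [|split; [split; [apply map_pair_nil; auto|split]|]].
    + rewrite fold_Forall, Forall_map, Forall_forall. intros [l k] Hi. apply (IH l k Hi).
    + rewrite map_fst_pair; auto.
    + rewrite fold_Forall, Forall_map, Forall_forall. intros [l k] Hi. apply (IH l k Hi).
    + intros y Hy. apply in_fv_list in Hy. destruct Hy as (l & k' & Hi & Hy).
      apply in_map_iff in Hi. destruct Hi as [[l0 k] [Heq Hi]]. injection Heq as <- <-.
      apply in_fv_list. exists l0, k. split; auto. apply (IH l0 k Hi). auto.
  - destruct Hgu as [Hgd Hgu].
    assert (HV : SC (subst s (Mu x t))).
    { split; [|split].
      - apply closed_subst_cover; auto. apply goodSC_good; auto.
      - apply (guarded_wf_subst (Mu x t) s Hs). simpl. auto.
      - apply (guarded_wf_subst (Mu x t) s Hs). simpl. auto. }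
    simpl in HV.
    destruct (IHt (upd s x (Mu x (subst (rem s x) t)))) as (H1 & H2 & H3); auto.
    + apply goodSC_upd; auto.
    + intros y Hy. unfold upd. destruct (Nat.eqb y x) eqn:E; [discriminate|].
      apply Hc. apply filter_In. rewrite E. auto.
    + split; [split; [apply gd_mclo; auto|auto]|split; auto].
      intros y Hy. apply filter_In in Hy. destruct Hy as [Hy E]. apply filter_In. auto.
Qed.

Lemma SC_dual (t : T) : SC t -> SC (dual t).
Proof.
  intros (Hc & Hgu & Hw). unfold dual, mcl.
  destruct (mclo_props t (eps BT L) goodSC_eps) as (H1 & H2 & H3); auto.
  { intros y Hy. unfold closed in Hc. rewrite Hc in Hy. destruct Hy. }
  split; [|split; apply guarded_wf_bar; auto].
  unfold closed. rewrite fv_bar. destruct (fv (mclo (eps BT L) t)) as [|y l] eqn:E; auto.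
  exfalso. assert (Hy : In y (fv t)) by (apply H3; left; auto).
  unfold closed in Hc. rewrite Hc in Hy. destruct Hy.
Qed.

Lemma dual_One : dual (One : T) = One. Proof. reflexivity. Qed.
Lemma dual_InT b (k : T) : dual (InT b k) = OutT b (dual k). Proof. reflexivity. Qed.
Lemma dual_OutT b (k : T) : dual (OutT b k) = InT b (dual k). Proof. reflexivity. Qed.
Lemma dual_InM (m k : T) : dual (InM m k) = OutM m (dual k).
Proof. unfold dual, mcl. simpl. rewrite subst_none; auto. Qed.
Lemma dual_OutM (m k : T) : dual (OutM m k) = InM m (dual k).
Proof. unfold dual, mcl. simpl. rewrite subst_none; auto. Qed.
Lemma dual_Ext (bs : list (L * T)) : dual (Ext bs) = IntC (map (fun '(l, k) => (l, dual k)) bs).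
Proof. unfold dual, mcl. simpl. rewrite map_pair_comp. reflexivity. Qed.
Lemma dual_IntC (bs : list (L * T)) : dual (IntC bs) = Ext (map (fun '(l, k) => (l, dual k)) bs).
Proof. unfold dual, mcl. simpl. rewrite map_pair_comp. reflexivity. Qed.
Lemma dual_Var x : dual (Var BT L x) = Var BT L x. Proof. reflexivity. Qed.

Definition isMu (t : T) : Prop := match t with Mu _ _ => True | _ => False end.

Lemma isMu_dual (t : T) : isMu (dual t) -> isMu t.
Proof.
  destruct t; simpl; auto; try (rewrite ?dual_InM, ?dual_OutM, ?dual_Ext, ?dual_IntC; simpl; auto).
Qed.

Inductive A : T -> T -> Prop :=
| A_refl t : A t t
| A_mu x k r : A (Defs.unfold x k) r -> A (Mu x k) r.

Lemma A_det : forall t r1, A t r1 -> forall r2, A t r2 -> ~ isMu r1 -> ~ isMu r2 -> r1 = r2.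
Proof.
  induction 1; intros r2 H2 N1 N2.
  - inversion H2; subst; auto. exfalso. apply N1. simpl. auto.
  - inversion H2; subst.
    + exfalso. apply N2. simpl. auto.
    + apply IHA; auto.
Qed.

Lemma A_snoc : forall t r, A t r -> forall x k, r = Mu x k -> A t (Defs.unfold x k).
Proof.
  induction 1; intros y j E.
  - subst. constructor. constructor.
  - constructor. eapply IHA; eauto.
Qed.

Lemma A_SC : forall t r, A t r -> SC t -> SC r.
Proof. induction 1; auto. intros H0. apply IHA. apply SC_unfold. auto. Qed.

Lemma A_dual : forall t r, A t r -> SC t -> A (dual t) (dual r).
Proof.
  induction 1; intros HS.
  - constructor.
  - rewrite dual_Mu. constructor. rewrite <- dual_unfold by (apply HS).
    apply IHA. apply SC_unfold. auto.
Qed.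

Lemma NoDup_fst_eq (bs : list (L * T)) l a b :
  NoDup (map fst bs) -> In (l, a) bs -> In (l, b) bs -> a = b.
Proof.
  induction bs as [|[l0 k0] bs IH]; simpl; intros Hnd Ha Hb; [contradiction|].
  inversion Hnd; subst.
  destruct Ha as [Ha|Ha]; destruct Hb as [Hb|Hb].
  - congruence.
  - injection Ha as <- <-. exfalso. apply H1. apply in_map_iff. eexists; split; [|exact Hb]; reflexivity.
  - injection Hb as <- <-. exfalso. apply H1. apply in_map_iff. eexists; split; [|exact Ha]; reflexivity.
  - eauto.
Qed.

Lemma in_map_pair (f : T -> T) (bs : list (L * T)) l k' :
  In (l, k') (map (fun '(l, k) => (l, f k)) bs) -> exists k, In (l, k) bs /\ k' = f k.
Proof.
  intros H. apply in_map_iff in H. destruct H as [[l0 k] [E Hi]]. injection E as <- <-. eauto.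
Qed.

Lemma in_map_pair2 (f : T -> T) (bs : list (L * T)) l k :
  In (l, k) bs -> In (l, f k) (map (fun '(l, k) => (l, f k)) bs).
Proof. intros H. apply in_map_iff. exists (l, k). auto. Qed.

Lemma SC_fv_sub (t u : T) : SC t -> guarded u -> wf u -> (forall y, In y (fv u) -> In y (fv t)) -> SC u.
Proof.
  intros (Hc & _ & _) Hg Hw Hs. split; auto. unfold closed in *.
  destruct (fv u) as [|y l] eqn:E; auto. exfalso. assert (In y (fv t)) by (apply Hs; left; auto).
  rewrite Hc in H. exact H.
Qed.

Lemma SC_Ext_in (bs : list (L * T)) l k : SC (Ext bs) -> In (l, k) bs -> SC k.
Proof.
  intros HS Hi. pose proof HS as (_ & Hg & Hw). simpl in Hg, Hw. destruct Hw as (_ & _ & Hw).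
  rewrite fold_Forall, Forall_forall in Hg, Hw.
  apply (SC_fv_sub (Ext bs)); auto. apply (Hg _ Hi). apply (Hw _ Hi).
  intros y Hy. simpl. apply in_fv_list. eauto.
Qed.

Lemma SC_IntC_in (bs : list (L * T)) l k : SC (IntC bs) -> In (l, k) bs -> SC k.
Proof.
  intros HS Hi. pose proof HS as (_ & Hg & Hw). simpl in Hg, Hw. destruct Hw as (_ & _ & Hw).
  rewrite fold_Forall, Forall_forall in Hg, Hw.
  apply (SC_fv_sub (IntC bs)); auto. apply (Hg _ Hi). apply (Hw _ Hi).
  intros y Hy. simpl. apply in_fv_list. eauto.
Qed.

Lemma SC_IntC_single (bs : list (L * T)) l k : SC (IntC bs) -> In (l, k) bs -> SC (IntC [(l, k)]).
Proof.
  intros HS Hi. pose proof (SC_IntC_in bs l k HS Hi) as (Hc & Hg & Hw).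
  split; [|split]; simpl.
  - unfold closed in *. simpl. rewrite app_nil_r. auto.
  - auto.
  - split; [discriminate|]. split; auto. constructor; auto. constructor.
Qed.

Lemma SC_vstep (r r' : T) a : SC r -> vstep r a r' -> SC r'.
Proof.
  intros HS H. destruct H.
  - destruct HS as (Hc & Hg & Hw). split; auto.
  - destruct HS as (Hc & Hg & Hw). split; auto.
  - pose proof HS as (Hc & [Hg1 Hg] & [Hw1 Hw]). apply (SC_fv_sub (InM m k)); auto.
    intros y Hy. simpl. apply in_or_app; auto.
  - pose proof HS as (Hc & [Hg1 Hg] & [Hw1 Hw]). apply (SC_fv_sub (OutM m k)); auto.
    intros y Hy. simpl. apply in_or_app; auto.
  - eapply SC_Ext_in; eauto.
  - eapply SC_IntC_in; eauto. left; auto.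
Qed.

Lemma SC_msg_InM (m k : T) : SC (InM m k) -> SC m.
Proof.
  intros HS. pose proof HS as (Hc & [Hg1 Hg] & [Hw1 Hw]). apply (SC_fv_sub (InM m k)); auto.
  intros y Hy. simpl. apply in_or_app; auto.
Qed.
Lemma SC_msg_OutM (m k : T) : SC (OutM m k) -> SC m.
Proof.
  intros HS. pose proof HS as (Hc & [Hg1 Hg] & [Hw1 Hw]). apply (SC_fv_sub (OutM m k)); auto.
  intros y Hy. simpl. apply in_or_app; auto.
Qed.

Lemma SC_tstep (r r' : T) : SC r -> tstep r r' -> SC r'.
Proof.
  intros HS H. destruct H.
  - eapply SC_IntC_single; eauto.
  - apply SC_unfold; auto.
Qed.

Lemma vstep_notMu (r r' : T) a : vstep r a r' -> ~ isMu r.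
Proof. destruct 1; simpl; auto. Qed.

Lemma dual_IntC_inv (r : T) bs' : dual r = IntC bs' ->
  exists bs, r = Ext bs /\ bs' = map (fun '(l, k) => (l, dual k)) bs.
Proof.
  destruct r; intros E;
    rewrite ?dual_InT, ?dual_OutT, ?dual_InM, ?dual_OutM, ?dual_Ext, ?dual_IntC, ?dual_Mu, ?dual_Var in E;
    try discriminate; try (rewrite dual_One in E; discriminate).
  injection E as <-. eauto.
Qed.

Definition Q (r s : T) : Prop :=
  (exists t, SC t /\ A t r /\ A (dual t) s) \/
  (exists t bs l k, SC t /\ A t (IntC bs) /\ In (l, k) bs /\ r = IntC [(l, k)] /\ A (dual t) s) \/
  (exists t bs' l k', SC t /\ A t r /\ A (dual t) (IntC bs') /\ In (l, k') bs' /\ s = IntC [(l, k')]).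

Lemma Q_base (k : T) : SC k -> Q k (dual k).
Proof. intros H. left. exists k. split; [auto|split; constructor]. Qed.

Lemma base_eq t (r s : T) : SC t -> A t r -> A (dual t) s -> ~ isMu r -> ~ isMu s -> s = dual r.
Proof.
  intros HSt Ha Hb Nr Ns. eapply A_det; [exact Hb | apply A_dual; auto | exact Ns |].
  intros H. apply Nr. apply isMu_dual. auto.
Qed.

Ltac tup := repeat (match goal with |- _ /\ _ => split end).

Lemma Q_step leb B (r s r' s' : T) : SC r -> SC s -> Q r s -> pair_tau leb B r s r' s' -> Q r' s'.
Proof.
  intros HSr HSs HQ Hp.
  destruct HQ as [(t & HSt & Ha & Hb) | [(t & bs & l & k & HSt & Ha & Hi & -> & Hb) |
                  (t & bs' & l & k' & HSt & Ha & Hb & Hi & ->)]];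
  destruct Hp as [r' Ht | s' Ht | r' s' a1 a2 Hr Hs Hc].
  - inversion Ht; subst.
    + right; left. exists t, bs, l, k. tup; auto.
    + left. exists t. tup; auto. eapply A_snoc; eauto.
  - inversion Ht; subst.
    + right; right. exists t, bs, l, k. tup; auto.
    + left. exists t. tup; auto. eapply A_snoc; eauto.
  - assert (Es : s = dual r) by (eapply base_eq; eauto; [eapply vstep_notMu; eauto|eapply vstep_notMu; eauto]).
    subst s. pose proof (SC_vstep _ _ _ HSr Hr) as HSr'.
    inversion Hr; subst.
    + rewrite dual_InT in Hs. inversion Hs; subst. apply Q_base; auto.
    + rewrite dual_OutT in Hs. inversion Hs; subst. apply Q_base; auto.
    + rewrite dual_InM in Hs. inversion Hs; subst. apply Q_base; auto.
    + rewrite dual_OutM in Hs. inversion Hs; subst. apply Q_base; auto.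
    + rewrite dual_Ext in Hs. inversion Hs; subst.
      destruct bs as [|[l3 k3] [|p bs]]; simpl in H1; try discriminate.
      injection H1 as <- ->.
      destruct H as [E|[]]. injection E as <- <-. apply Q_base; auto.
    + rewrite dual_IntC in Hs. simpl in Hs. inversion Hs; subst.
      destruct H0 as [E|[]]. injection E as <- <-. apply Q_base; auto.
  - inversion Ht; subst. simpl in *. lia.
  - inversion Ht; subst.
    + exfalso. assert (E : IntC bs0 = dual (IntC bs)).
      { eapply base_eq; eauto; simpl; auto. }
      rewrite dual_IntC in E. discriminate.
    + right; left. exists t, bs, l, k. tup; auto. eapply A_snoc; eauto.
  - inversion Hr; subst.
    assert (E : s = dual (IntC bs)).
    { eapply base_eq; eauto. simpl; auto. eapply vstep_notMu; eauto. }
    subst s. rewrite dual_IntC in Hs. inversion Hs; subst.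
    simpl in Hc. subst l0.
    destruct (in_map_pair _ _ _ _ H0) as (k0 & Hk0 & ->).
    pose proof (A_SC _ _ Ha HSt) as (_ & _ & (_ & Hnd & _)).
    rewrite (NoDup_fst_eq bs l r' k0 Hnd Hi Hk0).
    apply Q_base. apply (SC_IntC_in bs l k0 (A_SC _ _ Ha HSt) Hk0).
  - inversion Ht; subst.
    + exfalso. assert (E : dual (IntC bs) = IntC bs').
      { eapply A_det; [apply A_dual; eauto | exact Hb | |simpl; auto].
        rewrite dual_IntC. simpl. auto. }
      rewrite dual_IntC in E. discriminate.
    + right; right. exists t, bs', l, k'. tup; auto. eapply A_snoc; eauto.
  - inversion Ht; subst. simpl in *. lia.
  - inversion Hs; subst.
    assert (E : dual r = IntC bs').
    { eapply A_det; [apply A_dual; eauto | exact Hb | |simpl; auto].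
      intros H. apply isMu_dual in H. apply (vstep_notMu _ _ _ Hr H). }
    destruct (dual_IntC_inv r bs' E) as (bs & -> & ->).
    inversion Hr; subst. simpl in Hc. subst l0.
    destruct (in_map_pair _ _ _ _ Hi) as (k0 & Hk0 & ->).
    pose proof HSr as (_ & _ & (_ & Hnd & _)).
    rewrite (NoDup_fst_eq bs l r' k0 Hnd H0 Hk0).
    apply Q_base. apply (SC_Ext_in bs l k0 HSr Hk0).
Qed.

Lemma Q_move leb B (hleb : forall t, leb t t) (hB : forall s, SC s -> B s s) (r s : T) :
  SC r -> SC s -> Q r s -> (~ exists r' s', pair_tau leb B r s r' s') -> ticks r /\ ticks s.
Proof.
  intros HSr HSs HQ Hn.
  assert (Nr : ~ isMu r).
  { intros H. destruct r; simpl in H; try contradiction. apply Hn.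
    exists (Defs.unfold n r), s. apply pt_l. constructor. }
  assert (Ns : ~ isMu s).
  { intros H. destruct s; simpl in H; try contradiction. apply Hn.
    exists r, (Defs.unfold n s). apply pt_r. constructor. }
  destruct HQ as [(t & HSt & Ha & Hb) | [(t & bs & l & k & HSt & Ha & Hi & -> & Hb) |
                  (t & bs' & l & k' & HSt & Ha & Hb & Hi & ->)]].
  - assert (Es : s = dual r) by (eapply base_eq; eauto). subst s.
    destruct r as [| b k | b k | m k | m k | bs | bs | x k | x].
    { split; reflexivity. }
    all: exfalso.
    + apply Hn. exists k, (dual k). rewrite dual_InT. eapply pt_sync; [constructor|constructor|simpl; apply hleb].
    + apply Hn. exists k, (dual k). rewrite dual_OutT. eapply pt_sync; [constructor|constructor|simpl; apply hleb].
    + apply Hn. exists k, (dual k). rewrite dual_InM. eapply pt_sync; [constructor|constructor|simpl; apply hB].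
      eapply SC_msg_InM; eauto.
    + apply Hn. exists k, (dual k). rewrite dual_OutM. eapply pt_sync; [constructor|constructor|simpl; apply hB].
      eapply SC_msg_OutM; eauto.
    + destruct bs as [|[l k] [|p bs]].
      * destruct HSr as (_ & _ & (Hne & _)). apply Hne; auto.
      * apply Hn. exists k, (dual k). rewrite dual_Ext. simpl.
        eapply pt_sync; [apply vs_ext; left; reflexivity | apply vs_outL | simpl; reflexivity].
      * apply Hn. rewrite dual_Ext. eexists; eexists. apply pt_r. simpl.
        apply ts_int with (l := l) (k := dual k); [simpl; lia | left; reflexivity].
    + destruct bs as [|[l k] [|p bs]].
      * destruct HSr as (_ & _ & (Hne & _)). apply Hne; auto.
      * apply Hn. exists k, (dual k). rewrite dual_IntC. simpl.
        eapply pt_sync; [apply vs_outL | apply vs_ext; left; reflexivity | simpl; reflexivity].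
      * apply Hn. eexists; eexists. apply pt_l.
        apply ts_int with (l := l) (k := k); [simpl; lia | left; reflexivity].
    + apply Nr. simpl. auto.
    + destruct HSr as (Hc & _). unfold closed in Hc. simpl in Hc. discriminate.
  - exfalso. assert (E : s = dual (IntC bs)) by (eapply base_eq; eauto; simpl; auto).
    subst s. apply Hn. exists k, (dual k). rewrite dual_IntC.
    eapply pt_sync; [apply vs_outL | apply vs_ext; apply (in_map_pair2 (@dual BT L) bs l k Hi) | simpl; reflexivity].
  - exfalso. assert (E : dual r = IntC bs').
    { eapply A_det; [apply A_dual; eauto | exact Hb | |simpl; auto].
      intros H. apply isMu_dual in H. apply Nr. exact H. }
    destruct (dual_IntC_inv r bs' E) as (bs & -> & ->).
    destruct (in_map_pair _ _ _ _ Hi) as (k0 & Hk0 & ->).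
    apply Hn. exists k0, (dual k0).
    eapply pt_sync; [apply vs_ext; exact Hk0 | apply vs_outL | simpl; reflexivity].
Qed.

Lemma SC_pair leb B (r s r' s' : T) : SC r -> SC s -> pair_tau leb B r s r' s' -> SC r' /\ SC s'.
Proof.
  intros H1 H2 Hp. inversion Hp; subst; split; try assumption;
    first [eapply SC_tstep; [|eassumption]; eassumption | eapply SC_vstep; [|eassumption]; eassumption].
Qed.

End S.

Theorem mainTheorem7 (BT L : Type) (leb : BT -> BT -> Prop)
    (leb_refl : forall t, leb t t)
    (leb_trans : forall t1 t2 t3, leb t1 t2 -> leb t2 t3 -> leb t1 t3)
    (B : term BT L -> term BT L -> Prop)
    (B_refl : forall s, SC s -> B s s)
    (B_trans : forall s1 s2 s3, SC s1 -> SC s2 -> SC s3 -> B s1 s2 -> B s2 s3 -> B s1 s3)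
    (rho : term BT L) :
  SC rho -> compliant leb B rho (dual rho).
Proof.
  intros HS. exists (fun r s => SC r /\ SC s /\ Q BT L r s). split.
  - intros r s (HSr & HSs & HQ). split; [auto|split; [auto|split]].
    + intros Hn. apply (Q_move BT L leb B leb_refl B_refl r s); auto.
    + intros r' s' Hp. destruct (SC_pair BT L leb B r s r' s' HSr HSs Hp).
      split; [auto|split; [auto|]]. exact (Q_step BT L leb B r s r' s' HSr HSs HQ Hp).
  - split; [auto|split; [apply SC_dual; auto|apply Q_base; auto]].
Qed.
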